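(* In the fixed-base chain setting of the context, let $i\in\{1,\ldots,N\}$ and suppose $\mathbf{V}_{i-1}$ is a matrix with $\mathrm{Range}(\mathbf{V}_{i-1})=\mathcal{V}_{i-1}$ (for $i=1$ one may take $\mathbf{V}_0=\mathbf{0}_{6\times1}$). Let ${}^{J_i}\mathbf{V}_{i-1}={}^{J_i}\mathbf{X}_{i-1}\mathbf{V}_{i-1}$. Then the matrix $$\mathbf{V}_i=\Big[\ {}^{J_i}\mathbf{V}_{i-1},\ (\boldsymbol{\Phi}_i\times){}^{J_i}\mathbf{V}_{i-1},\ \ldots,\ (\boldsymbol{\Phi}_i\times)^5\,{}^{J_i}\mathbf{V}_{i-1},\ \ \boldsymbol{\Phi}_i\ \Big]$$ (i.e. the controllability matrix of the pair $((\boldsymbol\Phi_i\times),{}^{J_i}\mathbf V_{i-1})$ augmented by the column $\boldsymbol\Phi_i$) satisfies $\mathrm{Range}(\mathbf{V}_i)=\mathcal{V}_i$.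
   Context: Spatial notation. For $\mathbf{x}\in\mathbb{R}^3$, $\mathbf{S}(\mathbf{x})$ is the skew-symmetric matrix with $\mathbf{S}(\mathbf{x})\mathbf{y}=\mathbf{x}\times\mathbf{y}$. For $\mathbf{v}=[\boldsymbol{\omega};\mathbf{u}]\in\mathbb{R}^6$, $(\mathbf{v}\times)=\begin{bmatrix}\mathbf{S}(\boldsymbol{\omega})&\mathbf{0}\\ \mathbf{S}(\mathbf{u})&\mathbf{S}(\boldsymbol{\omega})\end{bmatrix}$. A spatial transform is a matrix $\begin{bmatrix}\mathbf{R}&\mathbf{0}\\-\mathbf{R}\mathbf{S}(\mathbf{p})&\mathbf{R}\end{bmatrix}$ with $\mathbf{R}\in SO(3)$, $\mathbf{p}\in\mathbb{R}^3$. Fixed-base chain. Body $0$ is the fixed ground with $\mathbf{v}_0=\mathbf{0}$. For $i=1,\ldots,N$, joint $i$ has coordinate $q_i\in\mathbb{R}$ and $\mathbf{v}_i={}^{i}\mathbf{X}_{i-1}(q_i)\mathbf{v}_{i-1}+\boldsymbol{\Phi}_i\dot q_i$, where $\boldsymbol{\Phi}_i\in\mathbb{R}^6$ is fixed, ${}^{i}\mathbf{X}_{i-1}(q_i)={}^{i}\mathbf{X}_{J_i}(q_i)\,{}^{J_i}\mathbf{X}_{i-1}$, ${}^{J_i}\mathbf{X}_{i-1}$ is a constant spatial transform, and ${}^{i}\mathbf{X}_{J_i}(q_i)$ is a spatial transform with ${}^{i}\mathbf{X}_{J_i}(0)=\mathbf{1}_6$ and $\frac{d}{dq_i}{}^{i}\mathbf{X}_{J_i}(q_i)=-(\boldsymbol{\Phi}_i\times){}^{i}\mathbf{X}_{J_i}(q_i)$.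 The attainable velocity span of body $i$ is $\mathcal{V}_i=\mathrm{span}\{\mathbf{v}_i(\mathbf{q},\dot{\mathbf{q}}):\mathbf{q},\dot{\mathbf{q}}\in\mathbb{R}^N\}\subseteq\mathbb{R}^6$, with $\mathcal V_0=\{\mathbf 0\}$. *)

(* Defs.v *)
From Stdlib Require Import Reals Lra Lia List Arith.
Import ListNotations.
Open Scope R_scope.

(* Vectors and matrices are functions of (0-based) indices; only indices
   0..2 (R^3, 3x3) resp. 0..5 (R^6, 6x6) are meaningful. *)
Definition Vec := nat -> R.
Definition Mat := nat -> nat -> R.

Fixpoint rsum (n : nat) (f : nat -> R) : R :=
  match n with O => 0 | S m => rsum m f + f m end.

Definition matmul (n : nat) (A B : Mat) : Mat :=
  fun i j => rsum n (fun k => A i k * B k j).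

Definition matvec (n : nat) (A : Mat) (v : Vec) : Vec :=
  fun i => rsum n (fun k => A i k * v k).

Definition idm : Mat := fun i j => if Nat.eqb i j then 1 else 0.

Fixpoint mpow (k : nat) (A : Mat) : Mat :=
  match k with O => idm | S m => matmul 6 A (mpow m A) end.

(* S(x) : S(x) y = x × y *)
Definition skew3 (x : Vec) : Mat := fun i j =>
  match i, j with
  | 0, 1 => - x 2%nat | 0, 2 => x 1%nat
  | 1, 0 => x 2%nat   | 1, 2 => - x 0%nat
  | 2, 0 => - x 1%nat | 2, 1 => x 0%nat
  | _, _ => 0
  end.

(* (v×) for v = [ω; u] : [[S ω, 0]; [S u, S ω]] *)
Definition crossm (v : Vec) : Mat := fun i j =>
  let w : Vec := fun k => v k in
  let u : Vec := fun k => v (k + 3)%nat in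
  if Nat.ltb i 3 then (if Nat.ltb j 3 then skew3 w i j else 0)
  else (if Nat.ltb j 3 then skew3 u (i - 3)%nat j
        else skew3 w (i - 3)%nat (j - 3)%nat).

Definition det3 (M : Mat) : R :=
  M 0%nat 0%nat * (M 1%nat 1%nat * M 2%nat 2%nat - M 1%nat 2%nat * M 2%nat 1%nat)
  - M 0%nat 1%nat * (M 1%nat 0%nat * M 2%nat 2%nat - M 1%nat 2%nat * M 2%nat 0%nat)
  + M 0%nat 2%nat * (M 1%nat 0%nat * M 2%nat 1%nat - M 1%nat 1%nat * M 2%nat 0%nat).

Definition SO3 (Rm : Mat) : Prop :=
  (forall i j, (i < 3)%nat -> (j < 3)%nat ->
     rsum 3 (fun k => Rm k i * Rm k j) = idm i j) /\ det3 Rm = 1.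

Definition spatial_transform (X : Mat) : Prop :=
  exists (Rm : Mat) (p : Vec), SO3 Rm /\
    forall i j, (i < 6)%nat -> (j < 6)%nat ->
      X i j = (if Nat.ltb i 3 then (if Nat.ltb j 3 then Rm i j else 0)
               else (if Nat.ltb j 3 then - matmul 3 Rm (skew3 p) (i - 3)%nat j
                     else Rm (i - 3)%nat (j - 3)%nat)).

Definition in_span (S : Vec -> Prop) (v : Vec) : Prop :=
  exists l : list (R * Vec),
    Forall (fun p => S (snd p)) l /\
    forall k, (k < 6)%nat ->
      v k = fold_right (fun p acc => fst p * snd p k + acc) 0 l.

(* Range of the 6 x m matrix with column list cols *)
Definition range (cols : list Vec) : Vec -> Prop :=
  in_span (fun w => In w cols).

(* ^iX_{i-1}(q_i) = ^iX_{J_i}(q_i) ^{J_i}X_{i-1} *)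
Definition Xlink (XJ : nat -> R -> Mat) (XJfix : nat -> Mat) (i : nat) (qi : R) : Mat :=
  matmul 6 (XJ i qi) (XJfix i).

(* body velocities; q, qd indexed 1..N (joint i uses q i, qd i) *)
Fixpoint vel (Phi : nat -> Vec) (XJ : nat -> R -> Mat) (XJfix : nat -> Mat)
         (q qd : nat -> R) (i : nat) : Vec :=
  match i with
  | O => fun _ => 0
  | S m => fun k => matvec 6 (Xlink XJ XJfix (S m) (q (S m)))
                      (vel Phi XJ XJfix q qd m) k + qd (S m) * Phi (S m) k
  end.

Definition attainable (Phi : nat -> Vec) (XJ : nat -> R -> Mat) (XJfix : nat -> Mat)
           (i : nat) : Vec -> Prop :=
  in_span (fun v => exists q qd : nat -> R, v = vel Phi XJ XJfix q qd i).

Definition chain_ok (N : nat) (Phi : nat -> Vec) (XJ : nat -> R -> Mat)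
           (XJfix : nat -> Mat) : Prop :=
  forall i, (1 <= i <= N)%nat ->
    spatial_transform (XJfix i) /\
    (forall qi, spatial_transform (XJ i qi)) /\
    (forall r c, (r < 6)%nat -> (c < 6)%nat -> XJ i 0 r c = idm r c) /\
    (forall qi r c, (r < 6)%nat -> (c < 6)%nat ->
       derivable_pt_lim (fun t => XJ i t r c) qi
         (- matmul 6 (crossm (Phi i)) (XJ i qi) r c)).

Definition next_cols (Phi : nat -> Vec) (XJfix : nat -> Mat) (i : nat)
           (Vprev : list Vec) : list Vec :=
  let JV := map (matvec 6 (XJfix i)) Vprev in
  flat_map (fun k => map (matvec 6 (mpow k (crossm (Phi i)))) JV) (seq 0 6)
  ++ [Phi i].

(* Main.v *)
Require Import Defs.
From Stdlib Require Import Reals List Arith Lia Lra Psatz FunctionalExtensionality.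
Import ListNotations.
Open Scope R_scope.

Lemma rsum_ext n f g : (forall k, (k < n)%nat -> f k = g k) -> rsum n f = rsum n g.
Proof. induction n; simpl; intros H; auto. rewrite IHn by (intros; apply H; lia). rewrite H by lia. auto. Qed.

Lemma rsum_plus n f g : rsum n (fun k => f k + g k) = rsum n f + rsum n g.
Proof. induction n; simpl. ring. rewrite IHn. ring. Qed.

Lemma rsum_scal n c f : rsum n (fun k => c * f k) = c * rsum n f.
Proof. induction n; simpl. ring. rewrite IHn. ring. Qed.

Lemma rsum_zero n f : (forall k, (k < n)%nat -> f k = 0) -> rsum n f = 0.
Proof. induction n; simpl; intros H; auto. rewrite IHn by (intros; apply H; lia). rewrite H by lia. ring. Qed.

Lemma rsum_swap n m (f : nat -> nat -> R) :
  rsum n (fun a => rsum m (fun b => f a b)) = rsum m (fun b => rsum n (fun a => f a b)).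
Proof. induction n; simpl. symmetry; apply rsum_zero; auto. rewrite IHn. rewrite <- rsum_plus. auto. Qed.

Definition dot (y x : Vec) : R := rsum 6 (fun k => y k * x k).
Definition lc (l : list (R * Vec)) (k : nat) : R :=
  fold_right (fun (p : R * Vec) (acc : R) => fst p * snd p k + acc) 0 l.

Lemma matvec_ext M x x' r : (forall k, (k < 6)%nat -> x k = x' k) -> matvec 6 M x r = matvec 6 M x' r.
Proof. intros H; unfold matvec; apply rsum_ext; intros; rewrite H; auto. Qed.

Lemma dot_ext y x x' : (forall k, (k < 6)%nat -> x k = x' k) -> dot y x = dot y x'.
Proof. intros H; unfold dot; apply rsum_ext; intros; rewrite H; auto. Qed.

Lemma matvec_matmul M P x r : matvec 6 (matmul 6 M P) x r = matvec 6 M (matvec 6 P x) r.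
Proof.
  unfold matvec, matmul.
  transitivity (rsum 6 (fun k => rsum 6 (fun j => M r j * (P j k * x k)))).
  - apply rsum_ext; intros. rewrite Rmult_comm, <- rsum_scal. apply rsum_ext; intros; ring.
  - rewrite rsum_swap. apply rsum_ext; intros. rewrite <- rsum_scal. auto.
Qed.

Lemma matvec_lin M a b x x' r :
  matvec 6 M (fun k => a * x k + b * x' k) r = a * matvec 6 M x r + b * matvec 6 M x' r.
Proof.
  unfold matvec. rewrite <- !rsum_scal, <- rsum_plus. apply rsum_ext; intros; ring.
Qed.

Lemma dot_lin y a b x x' : dot y (fun k => a * x k + b * x' k) = a * dot y x + b * dot y x'.
Proof. unfold dot. rewrite <- !rsum_scal, <- rsum_plus. apply rsum_ext; intros; ring. Qed.

Definition lmap (f : Vec -> Vec) (l : list (R * Vec)) := map (fun p => (fst p, f (snd p))) l.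

Lemma matvec_lc M l r : matvec 6 M (lc l) r = lc (lmap (matvec 6 M) l) r.
Proof.
  induction l as [|p l IH]; simpl.
  - unfold matvec. apply rsum_zero. intros; simpl; ring.
  - rewrite <- IH. replace (fst p * matvec 6 M (snd p) r + matvec 6 M (lc l) r) with
      (fst p * matvec 6 M (snd p) r + 1 * matvec 6 M (lc l) r) by ring.
    rewrite <- matvec_lin. apply matvec_ext; intros. unfold lc; simpl. rewrite Rmult_1_l. reflexivity.
Qed.

Lemma dot_lc_zero y l : Forall (fun p => dot y (snd p) = 0) l -> dot y (lc l) = 0.
Proof.
  induction l as [|p l IH]; intros H.
  - unfold dot; apply rsum_zero; intros; unfold lc; simpl; ring.
  - inversion H; subst.
    transitivity (dot y (fun k => fst p * snd p k + 1 * lc l k)).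
    + apply dot_ext; intros; unfold lc; simpl; rewrite Rmult_1_l; reflexivity.
    + rewrite dot_lin, IH, H2 by auto. ring.
Qed.

Lemma lc_app l1 l2 k : lc (l1 ++ l2) k = lc l1 k + lc l2 k.
Proof. induction l1; unfold lc in *; simpl. ring. rewrite IHl1. ring. Qed.

Lemma lc_scale c l k : lc (map (fun p => (c * fst p, snd p)) l) k = c * lc l k.
Proof. induction l; unfold lc in *; simpl. ring. rewrite IHl. ring. Qed.

Lemma in_span_trans (S1 S2 : Vec -> Prop) v :
  in_span S1 v -> (forall s, S1 s -> in_span S2 s) -> in_span S2 v.
Proof.
  intros [l [Hl Hv]] H.
  revert v Hv. induction l as [|p l IH]; intros v Hv.
  - exists nil. split; auto.
  - inversion Hl; subst.
    destruct (H _ H2) as [l1 [Hl1 Hv1]].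
    destruct (IH H3 (lc l)) as [l2 [Hl2 Hv2]]; [intros; auto|].
    exists (map (fun q => (fst p * fst q, snd q)) l1 ++ l2). split.
    + apply Forall_app; split; auto.
      rewrite Forall_map. eapply Forall_impl; [|exact Hl1]. simpl; auto.
    + intros k Hk. change (v k = lc (map (fun q => (fst p * fst q, snd q)) l1 ++ l2) k).
      rewrite lc_app, lc_scale.
      assert (E1 : v k = fst p * snd p k + lc l k) by (apply Hv; auto).
      assert (E2 : snd p k = lc l1 k) by (apply Hv1; auto).
      assert (E3 : lc l k = lc l2 k) by (apply Hv2; auto).
      rewrite E1, E2, E3. ring.
Qed.

Lemma in_span_single (S : Vec -> Prop) s v : S s -> (forall k, (k < 6)%nat -> v k = s k) -> in_span S v.
Proof. intros Hs Hv. exists [(1, s)]. split. constructor; auto. intros k Hk; simpl; rewrite Hv by auto; ring. Qed.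



Fixpoint it (M : Mat) (k : nat) (z : Vec) : Vec :=
  match k with O => z | S k' => it M k' (matvec 6 M z) end.

Lemma it_succ M k z : it M (S k) z = matvec 6 M (it M k z).
Proof. revert z; induction k; intros z; simpl; auto. rewrite <- IHk. auto. Qed.

Lemma it_ext M k z z' : (forall r, (r < 6)%nat -> z r = z' r) -> forall r, (r < 6)%nat -> it M k z r = it M k z' r.
Proof.
  revert z z'; induction k; intros z z' H r Hr; simpl; auto.
  apply IHk; auto. intros; apply matvec_ext; auto.
Qed.

Lemma it_lc M k l r : it M k (lc l) r = lc (lmap (it M k) l) r.
Proof.
  revert l; induction k; intros l; simpl.
  - unfold lmap. induction l; simpl; auto. unfold lc in *; simpl. rewrite IHl. auto.
  - replace (matvec 6 M (lc l)) with (lc (lmap (matvec 6 M) l))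
      by (apply functional_extensionality; intros; rewrite matvec_lc; auto).
    rewrite IHk. unfold lmap. rewrite map_map. reflexivity.
Qed.

Lemma matvec_opp M z : matvec 6 M (fun r => - z r) = fun r => - matvec 6 M z r.
Proof.
  apply functional_extensionality; intros r.
  replace (fun r0 => - z r0) with (fun r0 => (-1) * z r0 + 0 * z r0)
   by (apply functional_extensionality; intros; ring).
  rewrite matvec_lin. ring.
Qed.

Lemma it_opp M k z : it M k (fun r => - z r) = fun r => - it M k z r.
Proof. revert z; induction k; intros z; simpl; auto. rewrite matvec_opp. apply IHk. Qed.

Lemma matvec_idm z r : (r < 6)%nat -> matvec 6 idm z r = z r.
Proof.
  intros Hr. unfold matvec, idm.
  do 6 (destruct r as [|r]; [simpl; ring|]). lia.
Qed.

Lemma mpow_it M k z r : (r < 6)%nat -> matvec 6 (mpow k M) z r = it M k z r.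
Proof.
  revert r; induction k; intros r Hr; simpl.
  - apply matvec_idm; auto.
  - rewrite matvec_matmul. change (it M k (matvec 6 M z) r) with (it M (S k) z r). rewrite it_succ.
    apply matvec_ext. intros; apply IHk; auto.
Qed.

Definition av (p z : Vec) : Vec := fun r =>
  match r with
  | 0 => p 1%nat * z 2%nat - p 2%nat * z 1%nat
  | 1 => p 2%nat * z 0%nat - p 0%nat * z 2%nat
  | 2 => p 0%nat * z 1%nat - p 1%nat * z 0%nat
  | 3 => p 4%nat * z 2%nat - p 5%nat * z 1%nat + p 1%nat * z 5%nat - p 2%nat * z 4%nat
  | 4 => p 5%nat * z 0%nat - p 3%nat * z 2%nat + p 2%nat * z 3%nat - p 0%nat * z 5%nat
  | 5 => p 3%nat * z 1%nat - p 4%nat * z 0%nat + p 0%nat * z 4%nat - p 1%nat * z 3%nat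
  | _ => 0
  end.

Lemma Av_av p z : matvec 6 (crossm p) z = av p z.
Proof.
  apply functional_extensionality; intros r.
  unfold matvec, crossm, av.
  do 6 (destruct r as [|r]; [simpl; ring|]). simpl. ring.
Qed.

Lemma it5 p z r : (r < 6)%nat ->
  it (crossm p) 5 z r =
  - 2 * (p 0%nat * p 0%nat + p 1%nat * p 1%nat + p 2%nat * p 2%nat) * it (crossm p) 3 z r
  - (p 0%nat * p 0%nat + p 1%nat * p 1%nat + p 2%nat * p 2%nat) ^ 2 * it (crossm p) 1 z r.
Proof.
  intros Hr. simpl. rewrite !Av_av.
  unfold av.
  do 6 (destruct r as [|r]; [ring|]). lia.
Qed.


Lemma dpl_eq f t l l' : derivable_pt_lim f t l -> l = l' -> derivable_pt_lim f t l'.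
Proof. intros; subst; auto. Qed.

Lemma dpl_fext f g t l : (forall s, f s = g s) -> derivable_pt_lim f t l -> derivable_pt_lim g t l.
Proof. intros H. replace g with f by (apply functional_extensionality; auto). auto. Qed.

Lemma deriv_expC C t : derivable_pt_lim (fun s => exp (C * s)) t (C * exp (C * t)).
Proof.
  apply (dpl_fext (comp exp (fun s => C * s))); [reflexivity|].
  apply dpl_eq with (exp (C * t) * C); [|ring].
  apply derivable_pt_lim_comp.
  - apply dpl_eq with (C * 1); [|ring].
    apply (derivable_pt_lim_scal id C t 1). apply derivable_pt_lim_id.
  - apply derivable_pt_lim_exp.
Qed.

Lemma dpl_mult f g t lf lg : derivable_pt_lim f t lf -> derivable_pt_lim g t lg ->
  derivable_pt_lim (fun s => f s * g s) t (lf * g t + f t * lg).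
Proof. intros. apply (dpl_fext (mult_fct f g)); [reflexivity|]. apply derivable_pt_lim_mult; auto. Qed.

Lemma dpl_plus f g t lf lg : derivable_pt_lim f t lf -> derivable_pt_lim g t lg ->
  derivable_pt_lim (fun s => f s + g s) t (lf + lg).
Proof. intros. apply (dpl_fext (plus_fct f g)); [reflexivity|]. apply derivable_pt_lim_plus; auto. Qed.

Lemma abs_between a b : Rabs a <= b -> -b <= a <= b.
Proof. intros H. pose proof (Rle_abs a). pose proof (Rle_abs (-a)). rewrite Rabs_Ropp in *. lra. Qed.

Lemma bound_lemma x0 x1 x2 x3 x4 b c :
  let E := x0*x0 + x1*x1 + x2*x2 + x3*x3 + x4*x4 in
  let D := 2*x0*(-x1) + 2*x1*(-x2) + 2*x2*(-x3) + 2*x3*(-x4) + 2*x4*(-(b*x3 + c*x1)) in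
  Rabs D <= (2 + Rabs b + Rabs c) * E.
Proof.
  intros E D.
  assert (Hb : Rabs (2*b*x4*x3) <= Rabs b * (x4*x4 + x3*x3)).
  { rewrite !Rabs_mult. rewrite (Rabs_pos_eq 2) by lra.
    assert (0 <= Rabs b) by apply Rabs_pos.
    assert (2 * Rabs x4 * Rabs x3 <= x4*x4 + x3*x3).
    { assert (Rabs x4 * Rabs x4 = x4*x4) by (rewrite <- Rabs_mult; apply Rabs_pos_eq; nra).
      assert (Rabs x3 * Rabs x3 = x3*x3) by (rewrite <- Rabs_mult; apply Rabs_pos_eq; nra).
      pose proof (pow2_ge_0 (Rabs x4 - Rabs x3)). nra. }
    nra. }
  assert (Hc : Rabs (2*c*x4*x1) <= Rabs c * (x4*x4 + x1*x1)).
  { rewrite !Rabs_mult. rewrite (Rabs_pos_eq 2) by lra.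
    assert (0 <= Rabs c) by apply Rabs_pos.
    assert (2 * Rabs x4 * Rabs x1 <= x4*x4 + x1*x1).
    { assert (Rabs x4 * Rabs x4 = x4*x4) by (rewrite <- Rabs_mult; apply Rabs_pos_eq; nra).
      assert (Rabs x1 * Rabs x1 = x1*x1) by (rewrite <- Rabs_mult; apply Rabs_pos_eq; nra).
      pose proof (pow2_ge_0 (Rabs x4 - Rabs x1)). nra. }
    nra. }
  assert (0 <= Rabs b) by apply Rabs_pos.
  assert (0 <= Rabs c) by apply Rabs_pos.
  assert (Hx : 0 <= x0*x0) by nra. assert (0 <= x1*x1) by nra. assert (0 <= x2*x2) by nra.
  assert (0 <= x3*x3) by nra. assert (0 <= x4*x4) by nra.
  assert (HD : D = -(2*x0*x1 + 2*x1*x2 + 2*x2*x3 + 2*x3*x4) - 2*b*x4*x3 - 2*c*x4*x1) by (unfold D; ring).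
  rewrite HD. unfold E.
  apply Rabs_le.
  pose proof (abs_between _ _ Hb) as Hb'.
  pose proof (abs_between _ _ Hc) as Hc'.
  assert (H6 : forall u v, -(u*u+v*v) <= 2*u*v <= u*u+v*v).
  { intros u v. pose proof (pow2_ge_0 (u-v)). pose proof (pow2_ge_0 (u+v)). split; nra. }
  pose proof (H6 x0 x1). pose proof (H6 x1 x2). pose proof (H6 x2 x3). pose proof (H6 x3 x4).
  assert (0 <= Rabs b * (x0*x0)) by nra. assert (0 <= Rabs b * (x1*x1)) by nra.
  assert (0 <= Rabs b * (x2*x2)) by nra.
  assert (0 <= Rabs c * (x0*x0)) by nra. assert (0 <= Rabs c * (x3*x3)) by nra.
  assert (0 <= Rabs c * (x2*x2)) by nra.
  split; lra.
Qed.

Lemma ode5 (h : nat -> R -> R) b c :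
  (forall k t, (k < 5)%nat -> derivable_pt_lim (h k) t (- h (S k) t)) ->
  (forall t, h 5%nat t = b * h 3%nat t + c * h 1%nat t) ->
  (forall k, (k < 5)%nat -> h k 0 = 0) ->
  forall t, h 0%nat t = 0.
Proof.
  intros Hd H5 H0.
  set (E := fun s => h 0%nat s * h 0%nat s + h 1%nat s * h 1%nat s + h 2%nat s * h 2%nat s
                     + h 3%nat s * h 3%nat s + h 4%nat s * h 4%nat s).
  set (D := fun s => 2*h 0%nat s*(-h 1%nat s) + 2*h 1%nat s*(-h 2%nat s) + 2*h 2%nat s*(-h 3%nat s)
                     + 2*h 3%nat s*(-h 4%nat s) + 2*h 4%nat s*(-(b*h 3%nat s + c*h 1%nat s))).
  assert (HdE : forall s, derivable_pt_lim E s (D s)).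
  { intros s. unfold E, D.
    assert (Hsq : forall k, (k < 5)%nat -> derivable_pt_lim (fun s => h k s * h k s) s (2 * h k s * (- h (S k) s))).
    { intros k Hk. eapply dpl_eq. apply dpl_mult; apply Hd; auto. ring. }
    rewrite <- H5.
    repeat apply dpl_plus; apply Hsq; lia. }
  set (C := 2 + Rabs b + Rabs c).
  assert (HB : forall s, -(C * E s) <= D s <= C * E s).
  { intros s. apply abs_between. unfold C, E, D. apply bound_lemma. }
  assert (HE0 : E 0 = 0). { unfold E. rewrite !H0 by lia. ring. }
  assert (HEpos : forall s, 0 <= E s).
  { intros s; unfold E. pose proof (pow2_ge_0 (h 0%nat s)). pose proof (pow2_ge_0 (h 1%nat s)).
    pose proof (pow2_ge_0 (h 2%nat s)). pose proof (pow2_ge_0 (h 3%nat s)). pose proof (pow2_ge_0 (h 4%nat s)). nra. }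
  assert (HEt : forall t, E t = 0).
  { intros t. destruct (Rtotal_order t 0) as [Hlt|[Heq|Hgt]].
    - set (G := fun s => E s * exp (C * s)).
      destruct (MVT_cor2 G (fun s => D s * exp (C * s) + E s * (C * exp (C * s))) t 0 Hlt) as [x [Hx _]].
      { intros x _. apply (dpl_mult E (fun s => exp (_ * s))); [apply HdE | apply deriv_expC]. }
      unfold G in Hx. rewrite HE0 in Hx.
      pose proof (exp_pos (C * x)). pose proof (exp_pos (C * t)).
      specialize (HB x). specialize (HEpos t).
      assert (0 <= D x * exp (C * x) + E x * (C * exp (C * x))) by nra.
      assert (E t * exp (C * t) <= 0) by nra.
      nra.
    - subst; auto.
    - set (G := fun s => E s * exp ((-C) * s)).
      destruct (MVT_cor2 G (fun s => D s * exp ((-C) * s) + E s * ((-C) * exp ((-C) * s))) 0 t Hgt) as [x [Hx _]].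
      { intros x _. apply (dpl_mult E (fun s => exp (_ * s))); [apply HdE | apply deriv_expC]. }
      unfold G in Hx. rewrite HE0 in Hx.
      pose proof (exp_pos ((-C) * x)). pose proof (exp_pos ((-C) * t)).
      specialize (HB x). specialize (HEpos t).
      assert (D x * exp ((-C) * x) + E x * ((-C) * exp ((-C) * x)) <= 0) by nra.
      assert (E t * exp ((-C) * t) <= 0) by nra.
      nra. }
  intros t. specialize (HEt t). unfold E in HEt.
  pose proof (pow2_ge_0 (h 0%nat t)). pose proof (pow2_ge_0 (h 1%nat t)).
  pose proof (pow2_ge_0 (h 2%nat t)). pose proof (pow2_ge_0 (h 3%nat t)). pose proof (pow2_ge_0 (h 4%nat t)).
  nra.
Qed.

Lemma deriv_rsum n (f : nat -> R -> R) f' t :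
  (forall k, (k < n)%nat -> derivable_pt_lim (f k) t (f' k)) ->
  derivable_pt_lim (fun s => rsum n (fun k => f k s)) t (rsum n f').
Proof.
  induction n; intros H; simpl.
  - apply (dpl_fext (fct_cte 0)); [reflexivity|]. apply derivable_pt_lim_const.
  - apply dpl_plus; [apply IHn; intros; apply H; lia | apply H; lia].
Qed.

Lemma dpl_cmul (f : R -> R) a t l : derivable_pt_lim f t l -> derivable_pt_lim (fun s => a * f s) t (a * l).
Proof.
  intros H. eapply dpl_eq. apply (dpl_mult (fun _ => a) f). apply (dpl_fext (fct_cte a)); [reflexivity|].
  apply derivable_pt_lim_const. exact H. ring.
Qed.

Lemma deriv_Av M (z : R -> Vec) z' t :
  (forall r, (r < 6)%nat -> derivable_pt_lim (fun s => z s r) t (z' r)) ->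
  forall r, derivable_pt_lim (fun s => matvec 6 M (z s) r) t (matvec 6 M z' r).
Proof.
  intros H r. unfold matvec. apply (deriv_rsum 6 (fun k s => M r k * z s k)). intros k Hk.
  apply dpl_cmul. apply H; auto.
Qed.

Lemma deriv_it M k : forall (z : R -> Vec) z' t,
  (forall r, (r < 6)%nat -> derivable_pt_lim (fun s => z s r) t (z' r)) ->
  forall r, (r < 6)%nat -> derivable_pt_lim (fun s => it M k (z s) r) t (it M k z' r).
Proof.
  induction k; intros z z' t H r Hr; simpl.
  - apply H; auto.
  - apply (IHk (fun s => matvec 6 M (z s)) (matvec 6 M z')); auto.
    intros; apply deriv_Av; auto.
Qed.

Lemma deriv_dot y (z : R -> Vec) z' t :
  (forall r, (r < 6)%nat -> derivable_pt_lim (fun s => z s r) t (z' r)) ->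
  derivable_pt_lim (fun s => dot y (z s)) t (dot y z').
Proof.
  intros H. unfold dot. apply (deriv_rsum 6 (fun k s => y k * z s k)). intros k Hk.
  apply dpl_cmul. apply H; auto.
Qed.

Lemma dot_opp y z : dot y (fun r => - z r) = - dot y z.
Proof.
  replace (fun r => - z r) with (fun r => (-1) * z r + 0 * z r)
   by (apply functional_extensionality; intros; ring).
  rewrite dot_lin. ring.
Qed.

Definition DerivHyp (X : R -> Mat) (A : Mat) :=
  forall qi r c, (r < 6)%nat -> (c < 6)%nat ->
    derivable_pt_lim (fun t => X t r c) qi (- matmul 6 A (X qi) r c).

Lemma deriv_Xx X A (Hd : DerivHyp X A) x t r : (r < 6)%nat ->
  derivable_pt_lim (fun s => matvec 6 (X s) x r) t (- matvec 6 A (matvec 6 (X t) x) r).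
Proof.
  intros Hr. eapply dpl_eq.
  - unfold matvec at 1. apply (deriv_rsum 6 (fun c s => X s r c * x c) (fun c => - matmul 6 A (X t) r c * x c)).
    intros c Hc. eapply dpl_eq. apply (dpl_mult (fun s => X s r c) (fun _ => x c)).
    apply Hd; auto. apply (dpl_fext (fct_cte (x c))); [reflexivity|]. apply derivable_pt_lim_const. ring.
  - rewrite <- matvec_matmul. unfold matvec.
    transitivity ((-1) * rsum 6 (fun k => matmul 6 A (X t) r k * x k)); [|ring].
    rewrite <- rsum_scal; apply rsum_ext; intros; ring.
Qed.

Lemma Dg X A (Hd : DerivHyp X A) y x k t :
  derivable_pt_lim (fun s => dot y (it A k (matvec 6 (X s) x))) t
    (- dot y (it A (S k) (matvec 6 (X t) x))).
Proof.
  eapply dpl_eq.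
  - apply (deriv_dot y (fun s => it A k (matvec 6 (X s) x))).
    intros r Hr. apply (deriv_it A k (fun s => matvec 6 (X s) x) (fun r => - matvec 6 A (matvec 6 (X t) x) r)); auto.
    intros r' Hr'. apply deriv_Xx; auto.
  - rewrite it_opp, dot_opp. reflexivity.
Qed.

Definition IdHyp (X : R -> Mat) := forall r c, (r < 6)%nat -> (c < 6)%nat -> X 0 r c = idm r c.

Lemma at0 X (Hid : IdHyp X) A y x k : dot y (it A k (matvec 6 (X 0) x)) = dot y (it A k x).
Proof.
  apply dot_ext. apply it_ext. intros r Hr.
  rewrite <- (matvec_idm x r Hr). unfold matvec. apply rsum_ext. intros; rewrite Hid; auto.
Qed.

Lemma Key1 X A (Hd : DerivHyp X A) (Hid : IdHyp X) y x :
  (forall t, dot y (matvec 6 (X t) x) = 0) -> forall k, dot y (it A k x) = 0.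
Proof.
  intros H.
  assert (forall k t, dot y (it A k (matvec 6 (X t) x)) = 0).
  { induction k; intros t; [apply H|].
    assert (E : - dot y (it A (S k) (matvec 6 (X t) x)) = 0).
    { apply (uniqueness_limite (fun s => dot y (it A k (matvec 6 (X s) x))) t).
      apply Dg; auto.
      apply (dpl_fext (fct_cte 0)). intros; unfold fct_cte; rewrite IHk; auto.
      apply derivable_pt_lim_const. }
    lra. }
  intros k. rewrite <- (at0 X Hid A y x k). auto.
Qed.

Lemma Key2 X p (Hd : DerivHyp X (crossm p)) (Hid : IdHyp X) y x :
  (forall k, (k < 5)%nat -> dot y (it (crossm p) k x) = 0) ->
  forall t, dot y (matvec 6 (X t) x) = 0.
Proof.
  intros H t.
  set (a := p 0%nat * p 0%nat + p 1%nat * p 1%nat + p 2%nat * p 2%nat).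
  apply (ode5 (fun k s => dot y (it (crossm p) k (matvec 6 (X s) x))) (-2 * a) (- a ^ 2)).
  - intros k s Hk. apply Dg; auto.
  - intros s. cbv beta.
    transitivity (dot y (fun r => (-2 * a) * it (crossm p) 3 (matvec 6 (X s) x) r
                                  + (- a ^ 2) * it (crossm p) 1 (matvec 6 (X s) x) r)).
    + apply dot_ext. intros r Hr. rewrite it5 by auto. unfold a. ring.
    + apply dot_lin.
  - intros k Hk. simpl. rewrite at0; auto.
Qed.

From Stdlib Require Import Classical.
Module LA.
From HB Require Import structures.
From mathcomp Require Import all_boot all_algebra.
From mathcomp Require Import Rstruct.
Import GRing.Theory.

Section LA.
Local Open Scope ring_scope.

Definition rv (t : Vec) : 'rV[R]_6 := \row_(j < 6) t j.

Lemma rsum_big n f : rsum n f = \sum_(k < n) f k.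
Proof.
elim: n => [|n IH] /=; first by rewrite big_ord0.
by rewrite big_ord_recr /= IH.
Qed.

Definition SL (L : list Vec) : 'M[R]_6 :=
  foldr (fun t acc => (rv t + acc)%MS) (0 : 'M[R]_6) L.

Definition lc (l : list (R * Vec)) (k : nat) : R :=
  fold_right (fun p acc => (fst p * snd p k + acc)%R) 0%R l.

Lemma SL_span (L : list Vec) (w : 'rV[R]_6) : (w <= SL L)%MS ->
  exists l : list (R * Vec), Forall (fun p => In (snd p) L) l /\
   forall k : 'I_6, w 0 k = lc l k.
Proof.
elim: L w => [|t L IH] w /=.
  rewrite submx0 => /eqP ->. exists nil; split => // k; by rewrite mxE.
move=> /sub_addsmxP [[u1 u2] /= ->].
have [l [Hl Hk]] := IH (u2 *m SL L) (submxMl _ _).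
exists ((u1 0 0, t) :: l); split.
  constructor; first by left.
  apply: Forall_impl Hl => p /= Hp; by right.
move=> k /=. rewrite mxE -Hk mxE big_ord1 mxE //.
Qed.

Lemma rank_grow (T : Vec -> Prop) :
  (forall L, Forall T L -> exists t, T t /\ ~ (rv t <= SL L)%MS) ->
  forall k, exists L, Forall T L /\ (k <= \rank (SL L))%N.
Proof.
move=> H; elim=> [|k [L [HL Hk]]]; first by exists nil.
have [t [Ht Hn]] := H L HL.
exists (t :: L); split; first by constructor.
rewrite /=.
have lt : (SL L < (rv t + SL L))%MS.
  rewrite ltmxE addsmxSr /=. apply/negP => Hs; apply: Hn.
  exact: submx_trans (addsmxSl _ _) Hs.
have := rank_ltmx lt. exact: leq_ltn_trans Hk.
Qed.

Lemma max_L (T : Vec -> Prop) :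
  exists L, Forall T L /\ forall t, T t -> (rv t <= SL L)%MS.
Proof.
apply: NNPP => Hn.
have H : forall L, Forall T L -> exists t, T t /\ ~ (rv t <= SL L)%MS.
  move=> L HL. apply: NNPP => H2; apply: Hn; exists L; split => // t Ht.
  apply: NNPP => H3; apply: H2; by exists t.
have [L [_ Hk]] := @rank_grow T H 7.
have := rank_leq_col (SL L). move=> H6.
have := leq_trans Hk H6. by [].
Qed.

End LA.
Local Open Scope ring_scope.

Lemma dot_mx (t : Vec) (M : 'M[R]_6) j :
  rsum 6 (fun k => (if (k < 6)%N then M (inord k) j else 0%R) * t k) = (rv t *m M) 0 j.
Proof.
rewrite rsum_big !mxE; apply: eq_bigr => k _.
rewrite ltn_ord inord_val mxE GRing.mulrC //.
Qed.

Lemma duality (T : Vec -> Prop) (u : Vec) :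
  (forall y : Vec, (forall t, T t -> rsum 6 (fun k => y k * t k) = 0%R) ->
     rsum 6 (fun k => y k * u k) = 0%R) -> in_span T u.
Proof.
move=> H.
have [L [HL Hmax]] := max_L T.
have Hu : (rv u <= SL L)%MS.
  apply: NNPP => Hn.
  have : (rv u *m cokermx (SL L) != 0)%R by rewrite -submxE; apply/negP.
  move=> /eqP; apply; apply/matrixP => i j.
  rewrite ord1 -dot_mx mxE.
  apply: H => t Ht.

  rewrite dot_mx. have := Hmax t Ht. rewrite submxE => /eqP ->. by rewrite mxE.
have [l [Hl Hk]] := @SL_span L _ Hu.
exists l; split.
  apply: Forall_impl Hl => p Hp. move: HL; rewrite Forall_forall; by apply.
move=> k /ltP Hk6. have := Hk (Ordinal Hk6). by rewrite mxE.
Qed.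

End LA.

Lemma duality_std (T : Vec -> Prop) u :
  (forall y, (forall t, T t -> dot y t = 0) -> dot y u = 0) -> in_span T u.
Proof. intros H. apply LA.duality. exact H. Qed.

Lemma vel_local Phi XJ XJfix m : forall q qd q' qd',
  (forall j, (j <= m)%nat -> q j = q' j /\ qd j = qd' j) ->
  vel Phi XJ XJfix q qd m = vel Phi XJ XJfix q' qd' m.
Proof.
  induction m; intros q qd q' qd' H; simpl; auto.
  rewrite (IHm q qd q' qd') by (intros; apply H; lia).
  destruct (H (S m)) as [E1 E2]; auto. rewrite E1, E2. auto.
Qed.

Lemma vel_zero Phi XJ XJfix m : forall q qd,
  (forall j, (j <= m)%nat -> qd j = 0) -> forall k, vel Phi XJ XJfix q qd m k = 0.
Proof.
  induction m; intros q qd H k; simpl; auto.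
  rewrite H by lia. rewrite (matvec_ext _ _ (fun _ => 0)).
  - unfold matvec. rewrite rsum_zero; [ring|]. intros; ring.
  - intros; apply IHm; intros; apply H; lia.
Qed.

Lemma velS Phi XJ XJfix q qd m k :
  vel Phi XJ XJfix q qd (S m) k =
  matvec 6 (XJ (S m) (q (S m))) (matvec 6 (XJfix (S m)) (vel Phi XJ XJfix q qd m)) k
  + qd (S m) * Phi (S m) k.
Proof. simpl. unfold Xlink. rewrite matvec_matmul. auto. Qed.

Theorem lemma1 (N : nat) (Phi : nat -> Vec) (XJ : nat -> R -> Mat)
  (XJfix : nat -> Mat) (Hchain : chain_ok N Phi XJ XJfix)
  (i : nat) (Hi : (1 <= i <= N)%nat) (Vprev : list Vec)
  (HV : forall v, range Vprev v <-> attainable Phi XJ XJfix (i - 1) v) :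
  forall v, range (next_cols Phi XJfix i Vprev) v <-> attainable Phi XJ XJfix i v.
Proof.
  intros v. destruct (Hchain i Hi) as [_ [_ [Hid Hd]]].
  destruct i as [|m]; [lia|]. replace (S m - 1)%nat with m in HV by lia.
  set (A := crossm (Phi (S m))).
  set (F := XJfix (S m)).
  assert (HdX : DerivHyp (XJ (S m)) A) by (intros ? ? ? ? ?; apply Hd; auto).
  assert (HidX : IdHyp (XJ (S m))) by (intros ? ? ? ?; apply Hid; auto).
  assert (InK : forall w, In w (next_cols Phi XJfix (S m) Vprev) <->
     w = Phi (S m) \/ exists k u, (k < 6)%nat /\ In u Vprev /\
        w = matvec 6 (mpow k A) (matvec 6 F u)).
  { intros w. unfold next_cols. rewrite in_app_iff, in_flat_map. split.
    - intros [[k [Hk Hw]]|[Hw|[]]]; [right|left; auto].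
      apply in_seq in Hk. apply in_map_iff in Hw as [u [Hu Hu']].
      apply in_map_iff in Hu' as [v' [Hv' Hv'']]. exists k, v'. subst. repeat split; auto; lia.
    - intros [Hw|[k [v' [Hk [Hv' Hw]]]]]; [right; left; auto|left].
      exists k. split. apply in_seq; lia. apply in_map_iff.
      exists (matvec 6 F v'). split; auto. apply in_map_iff. exists v'; auto. }
  split.
  - intros Hv. apply (in_span_trans _ _ v Hv). intros w Hw.
    unfold attainable. apply duality_std. intros y Hy.
    apply InK in Hw. destruct Hw as [->|[k [u [Hk [Hu ->]]]]].
    + set (qd1 := fun j => if Nat.eqb j (S m) then 1 else 0).
      rewrite <- (Hy (vel Phi XJ XJfix (fun _ => 0) qd1 (S m))).
      2:{ exists (fun _ => 0), qd1; auto. }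
      apply dot_ext. intros k Hk. rewrite velS.
      rewrite (matvec_ext _ (matvec 6 _ _) (fun _ => 0)).
      * unfold qd1. rewrite Nat.eqb_refl. unfold matvec at 1. rewrite rsum_zero; [ring|]. intros; ring.
      * intros r Hr. rewrite (matvec_ext _ _ (fun _ => 0)).
        unfold matvec; apply rsum_zero; intros; ring.
        intros; apply vel_zero. intros j Hj. unfold qd1.
        destruct (Nat.eqb_spec j (S m)); [lia|auto].
    + assert (Hu2 : attainable Phi XJ XJfix m u).
      { apply HV. apply (in_span_single _ u); auto. }
      destruct Hu2 as [l [Hl Hul]].
      transitivity (dot y (it A k (matvec 6 F u))).
      { apply dot_ext; intros; apply mpow_it; auto. }
      transitivity (dot y (lc (lmap (it A k) (lmap (matvec 6 F) l)))).
      { apply dot_ext; intros r Hr. rewrite <- it_lc. apply it_ext; auto.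
        intros r' Hr'. rewrite <- matvec_lc. apply matvec_ext. intros; apply Hul; auto. }
      apply dot_lc_zero. unfold lmap. rewrite map_map. rewrite Forall_map.
      eapply Forall_impl; [|exact Hl]. intros [c g] [q [qd Hg]]. simpl in *. subst g.
      apply (Key1 (XJ (S m))); auto. intros t.
      set (q' := fun j => if Nat.eqb j (S m) then t else q j).
      set (qd' := fun j => if Nat.eqb j (S m) then 0 else qd j).
      rewrite <- (Hy (vel Phi XJ XJfix q' qd' (S m))).
      2:{ exists q', qd'; auto. }
      apply dot_ext. intros r Hr. rewrite velS.
      rewrite (vel_local Phi XJ XJfix m q' qd' q qd).
      * unfold q', qd'. rewrite Nat.eqb_refl. unfold F. rewrite Rmult_0_l, Rplus_0_r. reflexivity.
      * intros j Hj. unfold q', qd'. destruct (Nat.eqb_spec j (S m)); [lia|auto].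
  - intros Hv. apply (in_span_trans _ _ v Hv). intros g [q [qd ->]].
    apply duality_std. intros y Hy.
    assert (HPhi : dot y (Phi (S m)) = 0) by (apply Hy, InK; auto).
    set (x := vel Phi XJ XJfix q qd m).
    transitivity (dot y (fun k => 1 * matvec 6 (XJ (S m) (q (S m))) (matvec 6 F x) k + qd (S m) * Phi (S m) k)).
    { apply dot_ext; intros; rewrite velS; unfold x, F; ring. }
    rewrite dot_lin, HPhi.
    assert (Hx : attainable Phi XJ XJfix m x).
    { apply (in_span_single _ x); auto. exists q, qd; auto. }
    apply HV in Hx. destruct Hx as [l [Hl Hxl]].
    transitivity (1 * dot y (lc (lmap (fun u => matvec 6 (XJ (S m) (q (S m))) (matvec 6 F u)) l)) + qd (S m) * 0).
    { f_equal. f_equal. apply dot_ext; intros r Hr.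
      transitivity (matvec 6 (XJ (S m) (q (S m))) (lc (lmap (matvec 6 F) l)) r).
      - apply matvec_ext. intros r' Hr'. rewrite <- matvec_lc. apply matvec_ext. intros; apply Hxl; auto.
      - rewrite matvec_lc. unfold lmap. rewrite map_map. reflexivity. }
    rewrite dot_lc_zero; [ring|].
    unfold lmap. rewrite Forall_map. eapply Forall_impl; [|exact Hl]. intros [c u] Hu. simpl in *.
    apply (Key2 (XJ (S m)) (Phi (S m))); auto.
    intros k Hk. transitivity (dot y (matvec 6 (mpow k A) (matvec 6 F u))).
    { apply dot_ext; intros; symmetry; apply mpow_it; auto. }
    apply Hy. apply InK. right. exists k, u. repeat split; auto; lia.
Qed.
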